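(* For every positive integer $\ell$ and every integer $n\ge n_0:=3\ell+4$, there is a directed tree with $n$ vertices, in which every vertex has degree at most three and every directed path has length at most $\ell$, whose span is at least $\lceil(\ell+1)/2\rceil=\lceil(n_0-1)/6\rceil$.
   Context: A directed tree is a DAG (directed acyclic graph) whose underlying undirected graph is a tree. An upward-planar layered drawing of a DAG $G$ maps each vertex $v$ to a point in the plane whose y-coordinate $y(v)$ is an integer, and each edge $(u,v)$ (directed from tail $u$ to head $v$) to a strictly y-monotone curve going upward from $u$ to $v$ (so $y(u)<y(v)$), such that no two edges intersect except at common endpoints. The span of an edge $(u,v)$ in such a drawing $\Gamma$ is $y(v)-y(u)$; the span of $\Gamma$ is the maximum span of its edges; the span of an upward-planar DAG $G$ is the minimum span over all its upward-planar layered drawings. The degree of a vertex is its total number of incident edges. The length of a directed path is its number of edges. *)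

(* Defs.v *)
From Stdlib Require Import Reals ZArith.
From mathcomp Require Import all_boot.
Set Implicit Arguments. Unset Strict Implicit. Unset Printing Implicit Defensive.

(* A directed graph on vertex set 'I_n: e u v  means an edge u -> v. *)

Definition uadj (n : nat) (e : rel 'I_n) : rel 'I_n := fun u v => e u v || e v u.

Definition simple_underlying (n : nat) (e : rel 'I_n) : Prop :=
  (forall u, ~~ e u u) /\ (forall u v, e u v -> ~~ e v u).

Definition has_ucycle (n : nat) (e : rel 'I_n) : Prop :=
  exists s : seq 'I_n, [/\ 3 <= size s, uniq s & cycle (uadj e) s].

Definition underlying_tree (n : nat) (e : rel 'I_n) : Prop :=
  [/\ 0 < n, simple_underlying e, (forall u v, connect (uadj e) u v) & ~ has_ucycle e].

Definition dag (n : nat) (e : rel 'I_n) : Prop :=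
  forall u v, e u v -> ~~ connect e v u.

Definition directed_tree (n : nat) (e : rel 'I_n) : Prop :=
  dag e /\ underlying_tree e.

Definition degree (n : nat) (e : rel 'I_n) (v : 'I_n) : nat :=
  #|[set w | uadj e v w]|.

Definition paths_at_most (n : nat) (e : rel 'I_n) (l : nat) : Prop :=
  forall (x : 'I_n) (p : seq 'I_n), path e x p -> size p <= l.

(* Upward-planar layered drawing.
   y v : integer y-coordinate of v; px v : its x-coordinate; the point of v is
   (px v, y v).  crv u v : [0,1] -> R^2 is the curve of edge (u,v),
   given as a continuous map R -> R*R (only its restriction to [0,1] matters). *)
Definition vpt (n : nat) (px : 'I_n -> R) (y : 'I_n -> Z) (v : 'I_n) : R * R :=
  (px v, IZR (y v)).

Definition in01 (t : R) : Prop := (Rle 0 t /\ Rle t 1).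

Record layered_drawing (n : nat) (e : rel 'I_n)
    (px : 'I_n -> R) (y : 'I_n -> Z) (crv : 'I_n -> 'I_n -> R -> R * R) : Prop := {
  ld_inj : forall u v, vpt px y u = vpt px y v -> u = v;
  ld_cont : forall u v, e u v ->
      continuity (fun t => fst (crv u v t)) /\ continuity (fun t => snd (crv u v t));
  ld_start : forall u v, e u v -> crv u v R0 = vpt px y u;
  ld_end : forall u v, e u v -> crv u v R1 = vpt px y v;
  ld_mono : forall u v, e u v -> forall s t, in01 s -> in01 t -> Rlt s t ->
      Rlt (snd (crv u v s)) (snd (crv u v t));
  ld_novert : forall u v, e u v -> forall t, Rlt 0 t /\ Rlt t 1 ->
      forall w, crv u v t <> vpt px y w;
  ld_planar : forall u v u' v', e u v -> e u' v' -> (u, v) <> (u', v') ->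
      forall s t, in01 s -> in01 t -> crv u v s = crv u' v' t ->
      exists w, (w = u \/ w = v) /\ (w = u' \/ w = v') /\ crv u v s = vpt px y w
}.

Definition drawing_span_ge (n : nat) (e : rel 'I_n) (y : 'I_n -> Z) (k : nat) : Prop :=
  exists u v, e u v /\ (Z.of_nat k <= y v - y u)%Z.

(* G is upward-planar (has a drawing) and its span (min over drawings) is >= k *)
Definition span_ge (n : nat) (e : rel 'I_n) (k : nat) : Prop :=
  (exists px y crv, @layered_drawing n e px y crv) /\
  forall px y crv, @layered_drawing n e px y crv -> drawing_span_ge e y k.

(* Main.v *)
Require Import Defs.
From Stdlib Require Import Reals ZArith Lra Lia Ranalysis5 ClassicalEpsilon Classical.
From mathcomp Require Import all_boot.
Set Implicit Arguments. Unset Strict Implicit. Unset Printing Implicit Defensive.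

Module Topo.
Local Open Scope R_scope.

Ltac lrad := repeat match goal with H : _ \/ _ |- _ => destruct H end; lra.

Definition clamp (a b h : R) := Rmin b (Rmax a h).

Lemma clamp_in a b h : a <= b -> a <= clamp a b h <= b.
Proof. intros; unfold clamp, Rmin, Rmax; repeat destruct Rle_dec; lra. Qed.
Lemma clamp_id a b h : a <= h <= b -> clamp a b h = h.
Proof. intros; unfold clamp, Rmin, Rmax; repeat destruct Rle_dec; lra. Qed.
Lemma clamp_low a b h : a <= b -> h <= a -> clamp a b h = a.
Proof. intros; unfold clamp, Rmin, Rmax; repeat destruct Rle_dec; lra. Qed.
Lemma clamp_high a b h : a <= b -> b <= h -> clamp a b h = b.
Proof. intros; unfold clamp, Rmin, Rmax; repeat destruct Rle_dec; lra. Qed.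
Lemma clamp_lip a b h h' : a <= b -> Rabs (clamp a b h - clamp a b h') <= Rabs (h - h').
Proof. intros; unfold clamp, Rmin, Rmax; repeat destruct Rle_dec; unfold Rabs;
  repeat destruct Rcase_abs; lra. Qed.

Definition incr01 (g : R -> R) := forall s t, 0 <= s -> s < t -> t <= 1 -> g s < g t.

Lemma incr01_le g s t : incr01 g -> 0 <= s -> s <= t -> t <= 1 -> g s <= g t.
Proof. intros Hi H1 H2 H3. destruct H2 as [H2|H2]. left; apply Hi; lra. subst; lra. Qed.

Definition T (g : R -> R) (h : R) : R :=
  epsilon (inhabits 0) (fun t => 0 <= t <= 1 /\ g t = clamp (g 0) (g 1) h).

Lemma T_spec g h : continuity g -> incr01 g ->
  0 <= T g h <= 1 /\ g (T g h) = clamp (g 0) (g 1) h.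
Proof.
  intros Hc Hi. unfold T. apply epsilon_spec.
  assert (H01: g 0 <= g 1) by (left; apply Hi; lra).
  destruct (f_interv_is_interv g 0 1 (clamp (g 0) (g 1) h)) as [x [Hx1 Hx2]].
  lra. apply clamp_in; auto. intros; apply Hc.
  exists x; split; auto.
Qed.

Lemma T_cont g : continuity g -> incr01 g -> continuity (T g).
Proof.
  intros Hc Hi h0.
  unfold continuity_pt, continue_in, limit1_in, limit_in. simpl. unfold R_dist.
  intros eps Heps.
  assert (H01: g 0 <= g 1) by (left; apply Hi; lra).
  destruct (T_spec h0 Hc Hi) as [Ht0 Hg0].
  set (t0 := T g h0) in *.
  set (tp := Rmin 1 (t0 + eps/2)).
  set (tm := Rmax 0 (t0 - eps/2)).
  assert (Htp : tp <= 1 /\ tp <= t0 + eps/2 /\ (tp = 1 \/ tp = t0 + eps/2)).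
  { unfold tp, Rmin; destruct (Rle_dec 1 (t0 + eps/2)); lra. }
  assert (Htm : 0 <= tm /\ t0 - eps/2 <= tm /\ (tm = 0 \/ tm = t0 - eps/2)).
  { unfold tm, Rmax; destruct (Rle_dec 0 (t0 - eps/2)); lra. }
  set (d1 := if Rlt_dec t0 1 then g tp - g t0 else 1).
  set (d2 := if Rlt_dec 0 t0 then g t0 - g tm else 1).
  assert (Hd1 : d1 > 0).
  { unfold d1; destruct (Rlt_dec t0 1); simpl; try lra.
    assert (g t0 < g tp). { apply (Hi t0 tp); lrad. } lra. }
  assert (Hd2 : d2 > 0).
  { unfold d2; destruct (Rlt_dec 0 t0); simpl; try lra.
    assert (g tm < g t0). { apply (Hi tm t0); lrad. } lra. }
  exists (Rmin d1 d2). split. apply Rmin_pos; [exact Hd1|exact Hd2].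
  intros h [_ Hh].
  destruct (T_spec h Hc Hi) as [Ht Hg].
  assert (Hl := clamp_lip h h0 H01).
  assert (Hm1 := Rmin_l d1 d2). assert (Hm2 := Rmin_r d1 d2).
  assert (Hup : T g h < t0 + eps / 2).
  { destruct (Rlt_or_le (T g h) (t0 + eps/2)) as [|Hc2]; auto. exfalso.
    assert (Ht01 : t0 < 1) by lra.
    assert (Htp' : tp = t0 + eps/2) by lrad.
    assert (g tp <= g (T g h)) by (apply incr01_le; auto; lra).
    unfold d1 in *; destruct (Rlt_dec t0 1); simpl in *; try lra.
    revert Hl Hh; rewrite <- Hg, <- Hg0; unfold Rabs; repeat destruct Rcase_abs; lra. }
  assert (Hlo : t0 - eps / 2 < T g h).
  { destruct (Rlt_or_le (t0 - eps/2) (T g h)) as [|Hc2]; auto. exfalso.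
    assert (Ht01 : 0 < t0) by lra.
    assert (Htm' : tm = t0 - eps/2) by lrad.
    assert (g (T g h) <= g tm) by (apply incr01_le; auto; lra).
    unfold d2 in *; destruct (Rlt_dec 0 t0); simpl in *; try lra.
    revert Hl Hh; rewrite <- Hg, <- Hg0; unfold Rabs; repeat destruct Rcase_abs; lra. }
  unfold Rabs; destruct Rcase_abs; lra.
Qed.

Lemma sign_fwd f a b : continuity f -> a <= b ->
  (forall h, a <= h <= b -> f h <> 0) -> 0 < f a -> 0 < f b.
Proof.
  intros Hc Hab Hnz Ha.
  destruct (Rlt_or_le 0 (f b)) as [|Hb]; auto. exfalso.
  destruct Hab as [Hab|Hab]; [|subst; lra].
  assert (Hb' : f b < 0) by (destruct Hb; auto; exfalso; apply (Hnz b); lra).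
  destruct (IVT_interv (fun x => - f x) a b) as [z [Hz1 Hz2]]; try lra.
  intros; apply continuity_pt_opp; apply Hc.
  apply (Hnz z); auto; lra.
Qed.

Lemma sign_bwd f a b : continuity f -> a <= b ->
  (forall h, a <= h <= b -> f h <> 0) -> 0 < f b -> 0 < f a.
Proof.
  intros Hc Hab Hnz Hb.
  destruct (Rlt_or_le 0 (f a)) as [|Ha]; auto. exfalso.
  destruct Hab as [Hab|Hab]; [|subst; lra].
  assert (Ha' : f a < 0) by (destruct Ha; auto; exfalso; apply (Hnz a); lra).
  destruct (IVT_interv f a b) as [z [Hz1 Hz2]]; try lra.
  intros; apply Hc.
  apply (Hnz z); auto; lra.
Qed.

End Topo.

Section Draw.
Local Open Scope R_scope.
Import Topo.
Variables (n : nat) (e : rel 'I_n) (px : 'I_n -> R) (y : 'I_n -> Z)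
  (crv : 'I_n -> 'I_n -> R -> R * R).
Hypothesis D : layered_drawing e px y crv.

Definition Y (v : 'I_n) : R := IZR (y v).
Definition gy u v := fun t => snd (crv u v t).
Definition ex u v h := fst (crv u v (T (gy u v) h)).

Lemma gy0 u v : e u v -> gy u v 0 = Y u.
Proof. intro H; unfold gy; rewrite (ld_start D H); reflexivity. Qed.
Lemma gy1 u v : e u v -> gy u v 1 = Y v.
Proof. intro H; unfold gy; rewrite (ld_end D H); reflexivity. Qed.

Lemma gy_incr u v : e u v -> incr01 (gy u v).
Proof. intros H s t H1 H2 H3. apply (ld_mono D H); unfold in01; lra. Qed.

Lemma gy_cont u v : e u v -> continuity (gy u v).
Proof. intro H; apply (proj2 (ld_cont D H)). Qed.

Lemma edge_Y u v : e u v -> Y u < Y v.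
Proof. intro H. rewrite <- (gy0 H), <- (gy1 H). apply (gy_incr H); lra. Qed.

Lemma edge_y u v : e u v -> (y u < y v)%Z.
Proof. intro H. apply lt_IZR. apply (edge_Y H). Qed.

Lemma ex_cont u v : e u v -> continuity (ex u v).
Proof.
  intros H x. unfold ex.
  apply (continuity_pt_comp (T (gy u v)) (fun t => fst (crv u v t))).
  apply T_cont; [apply gy_cont|apply gy_incr]; auto.
  apply (proj1 (ld_cont D H)).
Qed.

Lemma T_props u v h : e u v ->
  0 <= T (gy u v) h <= 1 /\ gy u v (T (gy u v) h) = clamp (Y u) (Y v) h.
Proof.
  intro H. rewrite <- (gy0 H), <- (gy1 H). apply T_spec; [apply gy_cont|apply gy_incr]; auto.
Qed.

Lemma ex_low u v h : e u v -> h <= Y u -> ex u v h = px u.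
Proof.
  intros H Hh. destruct (T_props h H) as [H1 H2].
  have HY := edge_Y H.
  rewrite clamp_low in H2; try lra.
  assert (T (gy u v) h = 0).
  { destruct H1 as [[H1|H1] H3]; auto. exfalso.
    have := gy_incr H (s:=0) (t:=T (gy u v) h). rewrite gy0; auto. lra. }
  unfold ex. rewrite H0 (ld_start D H). reflexivity.
Qed.

Lemma ex_high u v h : e u v -> Y v <= h -> ex u v h = px v.
Proof.
  intros H Hh. destruct (T_props h H) as [H1 H2].
  have HY := edge_Y H.
  rewrite clamp_high in H2; try lra.
  assert (T (gy u v) h = 1).
  { destruct H1 as [H3 [H1|H1]]; auto. exfalso.
    have := gy_incr H (s:=T (gy u v) h) (t:=1). rewrite gy1; auto. lra. }
  unfold ex. rewrite H0 (ld_end D H). reflexivity.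
Qed.

Lemma ex_pt u v h : e u v -> Y u <= h <= Y v ->
  in01 (T (gy u v) h) /\ crv u v (T (gy u v) h) = (ex u v h, h).
Proof.
  intros H Hh. destruct (T_props h H) as [H1 H2]. split. exact H1.
  rewrite clamp_id in H2; auto. unfold ex. unfold gy in H2.
  set t := T (gy u v) h in H2 *. rewrite -H2. apply surjective_pairing.
Qed.

Fixpoint pf (x : 'I_n) (p : seq 'I_n) (h : R) : R :=
  match p with [::] => px x | z :: p' => ex x z h + pf z p' h - px z end.

Lemma pf_cont x p : path e x p -> continuity (pf x p).
Proof.
  elim: p x => [|z p IH] x /=.
  - intros _. apply continuity_const. intros a b; reflexivity.
  - move=> /andP [Hxz Hp]. intro h.
    apply continuity_pt_minus. apply continuity_pt_plus.
    apply ex_cont; auto. apply IH; auto. apply continuity_pt_const. intros a b; reflexivity.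
Qed.

Lemma path_Y x p : path e x p -> Y x <= Y (last x p).
Proof.
  elim: p x => [|z p IH] x /=. intros; lra.
  move=> /andP [Hxz Hp]. have := edge_Y Hxz. have := IH z Hp. lra.
Qed.

Lemma pf_low x p h : path e x p -> h <= Y x -> pf x p h = px x.
Proof.
  elim: p x => [|z p IH] x //=.
  move=> /andP [Hxz Hp] Hh. have HY := edge_Y Hxz.
  rewrite (ex_low Hxz Hh) (IH z Hp); lra.
Qed.

Lemma pf_high x p h : path e x p -> Y (last x p) <= h -> pf x p h = px (last x p).
Proof.
  elim: p x => [|z p IH] x //=.
  move=> /andP [Hxz Hp] Hh. have HY := path_Y Hp.
  rewrite (ex_high Hxz) ?(IH z Hp); lra.
Qed.

Lemma pf_pt x p h : path e x p -> p <> [::] -> Y x <= h <= Y (last x p) ->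
  exists a b, [/\ e a b, a \in x :: p, b \in x :: p, Y a <= h <= Y b & pf x p h = ex a b h].
Proof.
  elim: p x => [|z p IH] x //=.
  move=> /andP [Hxz Hp] _ Hh.
  destruct (Rle_or_lt h (Y z)) as [Hz|Hz].
  - exists x, z; split; auto.
    + by rewrite mem_head.
    + by rewrite in_cons mem_head orbT.
    + lra.
    + rewrite (pf_low Hp Hz); lra.
  - destruct p as [|w p'].
    + simpl in Hh. lra.
    + destruct (IH z Hp) as [a [b [H1 H2 H3 H4 H5]]]; [discriminate| lra |].
      exists a, b; split; auto.
      * by rewrite in_cons H2 orbT.
      * by rewrite in_cons H3 orbT.
      * rewrite H5 (ex_high Hxz); lra.
Qed.

Lemma pf_meet x p x' p' h : path e x p -> p <> [::] -> path e x' p' -> p' <> [::] ->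
  Y x <= h <= Y (last x p) -> Y x' <= h <= Y (last x' p') ->
  pf x p h = pf x' p' h ->
  (exists w, [/\ w \in x :: p, w \in x' :: p' & Y w = h]) \/
  (exists a b, [/\ a <> b, a \in x :: p, a \in x' :: p', b \in x :: p & b \in x' :: p']).
Proof.
  intros Hp Hn Hp' Hn' Hh Hh' Heq.
  destruct (pf_pt Hp Hn Hh) as [a [b [H1 H2 H3 H4 H5]]].
  destruct (pf_pt Hp' Hn' Hh') as [a' [b' [H1' H2' H3' H4' H5']]].
  case Hab: ((a == a') && (b == b')).
  - move/andP: Hab => [/eqP Ea /eqP Eb]. subst a' b'. right. exists a, b; split; auto.
    intro E; subst b. have := edge_Y H1. lra.
  - left.
    destruct (ex_pt H1 (conj (proj1 H4) (proj2 H4))) as [Ht Hc].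
    destruct (ex_pt H1' (conj (proj1 H4') (proj2 H4'))) as [Ht' Hc'].
    assert (Hne : (a, b) <> (a', b')).
    { intro E; inversion E; subst. by rewrite !eqxx in Hab. }
    have Hq : crv a b (T (gy a b) h) = crv a' b' (T (gy a' b') h).
    { rewrite Hc Hc' -H5 -H5' Heq; reflexivity. }
    destruct (ld_planar D H1 H1' Hne Ht Ht' Hq) as [w [Hw1 [Hw2 Hw3]]].
    exists w; split.
    + destruct Hw1; subst; auto.
    + destruct Hw2; subst; auto.
    + rewrite Hc in Hw3. unfold vpt in Hw3. inversion Hw3. reflexivity.
Qed.


Lemma edge_Y1 u v : e u v -> Y u + 1 <= Y v.
Proof. intro H. have := edge_y H. intro Hz. unfold Y. rewrite <- plus_IZR. apply IZR_le. lia. Qed.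

Lemma cont_diff f g : continuity f -> continuity g -> continuity (fun h => f h - g h).
Proof. intros Hf Hg x. apply (continuity_pt_minus f g); auto. Qed.

Lemma trap_core s pL pR cM pM d q :
  path e s pL -> pL <> [::] -> path e s pR -> pR <> [::] ->
  path e s (cM :: pM) -> path e d q -> q <> [::] -> last d q = cM ->
  Y d <= Y s -> Y cM <= Y (last s pL) -> Y cM <= Y (last s pR) ->
  (forall w, w \in s :: pL -> w \in s :: cM :: pM -> w = s) ->
  (forall w, w \in s :: cM :: pM -> w \in s :: pR -> w = s) ->
  (forall w, w \in d :: q -> w \in s :: pL -> False) ->
  (forall w, w \in d :: q -> w \in s :: pR -> False) ->
  pf s pL (Y s + /2) < pf s (cM :: pM) (Y s + /2) < pf s pR (Y s + /2) -> False.
Proof.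
  intros HL HLn HR HRn HM HD HDn Hlast Hd HtL HtR HLM HMR HDL HDR Hord.
  have HsM : e s cM by move: HM => /= /andP [].
  have HMp : path e cM pM by move: HM => /= /andP [].
  have Hs1 := edge_Y1 HsM.
  have HtM := path_Y HMp.
  set h1 := Y s + /2 in Hord.
  have HMn : cM :: pM <> [::] by discriminate.
  have HvM : pf s (cM :: pM) (Y cM) = px cM.
  { simpl. rewrite (ex_high HsM) ?(pf_low HMp);  lra. }
  have HvD : pf d q (Y cM) = px cM.
  { rewrite (pf_high HD); rewrite Hlast;  lra. }
  have S1L : 0 < pf s (cM :: pM) (Y cM) - pf s pL (Y cM).
  { apply (sign_fwd (f := fun h => pf s (cM :: pM) h - pf s pL h) (a := h1)).
    - apply cont_diff; apply pf_cont; auto.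
    - unfold h1; lra.
    - intros h Hh E. apply Rminus_diag_uniq in E.
      destruct (pf_meet HM HMn HL HLn (h := h)) as [[w [W1 W2 W3]]|[a [b [W1 W2 W3 W4 W5]]]];
        [ simpl; unfold h1 in *; lra | unfold h1 in *; lra | auto | | ].
      + have := HLM w W2 W1. intro; subst w. unfold h1 in Hh. lra.
      + have := HLM a W3 W2. have := HLM b W5 W4. intros; subst; auto.
    - lra. }
  have S1R : 0 < pf s pR (Y cM) - pf s (cM :: pM) (Y cM).
  { apply (sign_fwd (f := fun h => pf s pR h - pf s (cM :: pM) h) (a := h1)).
    - apply cont_diff; apply pf_cont; auto.
    - unfold h1; lra.
    - intros h Hh E. apply Rminus_diag_uniq in E.
      destruct (pf_meet HM HMn HR HRn (h := h)) as [[w [W1 W2 W3]]|[a [b [W1 W2 W3 W4 W5]]]];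
        [ simpl; unfold h1 in *; lra | unfold h1 in *; lra | auto | | ].
      + have := HMR w W1 W2. intro; subst w. unfold h1 in Hh. lra.
      + have := HMR a W2 W3. have := HMR b W4 W5. intros; subst; auto.
    - lra. }
  have HqY : Y (last d q) = (Y cM) by rewrite Hlast.
  have S2L : 0 < pf d q (Y s) - pf s pL (Y s).
  { apply (sign_bwd (f := fun h => pf d q h - pf s pL h) (b := (Y cM))).
    - apply cont_diff; apply pf_cont; auto.
    -  lra.
    - intros h Hh E. apply Rminus_diag_uniq in E.
      destruct (pf_meet HD HDn HL HLn (h := h)) as [[w [W1 W2 W3]]|[a [b [W1 W2 W3 W4 W5]]]];
        [ lra | lra | auto | | ].
      + exact (HDL w W1 W2).
      + exact (HDL a W2 W3).
    - rewrite HvD. rewrite HvM in S1L. lra. }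
  have S2R : 0 < pf s pR (Y s) - pf d q (Y s).
  { apply (sign_bwd (f := fun h => pf s pR h - pf d q h) (b := (Y cM))).
    - apply cont_diff; apply pf_cont; auto.
    -  lra.
    - intros h Hh E. apply Rminus_diag_uniq in E.
      destruct (pf_meet HD HDn HR HRn (h := h)) as [[w [W1 W2 W3]]|[a [b [W1 W2 W3 W4 W5]]]];
        [ lra | lra | auto | | ].
      + exact (HDR w W1 W2).
      + exact (HDR a W2 W3).
    - rewrite HvD. rewrite HvM in S1R. lra. }
  rewrite (pf_low HL) in S2L; [|lra]. rewrite (pf_low HR) in S2R; [|lra]. lra.
Qed.

Lemma path_y x p : path e x p -> (y x + Z.of_nat (size p) <= y (last x p))%Z.
Proof.
  elim: p x => [|z p IH] x /=; first lia.
  move=> /andP [H1 H2]. have := edge_y H1. have := IH z H2. lia.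
Qed.

Lemma trap3 s (c d : nat -> 'I_n) (p q : nat -> seq 'I_n) :
  (forall i, (i < 3)%N -> path e s (c i :: p i)) ->
  (forall i, (i < 3)%N -> [/\ path e (d i) (q i), q i <> [::] & last (d i) (q i) = c i]) ->
  (forall i, (i < 3)%N -> Y (d i) <= Y s) ->
  (forall i j, (i < 3)%N -> (j < 3)%N -> Y (c i) <= Y (last s (c j :: p j))) ->
  (forall i j w, (i < 3)%N -> (j < 3)%N -> i <> j ->
     w \in s :: c i :: p i -> w \in s :: c j :: p j -> w = s) ->
  (forall i j w, (i < 3)%N -> (j < 3)%N -> i <> j ->
     w \in d i :: q i -> w \in s :: c j :: p j -> False) ->
  False.
Proof.
  intros HW HD Hd Htop HWW HDW.
  set h1 := Y s + /2.
  set v := fun i => pf s (c i :: p i) h1.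
  have Hr : forall i, (i < 3)%N -> Y s <= h1 <= Y (last s (c i :: p i)).
  { intros i Hi. have := HW i Hi. move=> /= /andP [H1 H2]. have := edge_Y1 H1.
    have := path_Y H2. simpl. unfold h1. lra. }
  have Hn : forall i, c i :: p i <> [::] by [].
  have Hdis : forall i j, (i < 3)%N -> (j < 3)%N -> i <> j -> v i <> v j.
  { intros i j Hi Hj Hij E.
    destruct (pf_meet (HW i Hi) (@Hn i) (HW j Hj) (@Hn j) (Hr i Hi) (Hr j Hj) E)
      as [[w [W1 W2 W3]]|[a [b [W1 W2 W3 W4 W5]]]].
    - have := HWW i j w Hi Hj Hij W1 W2. intro; subst w. unfold h1 in W3. lra.
    - have := HWW i j a Hi Hj Hij W2 W3. have := HWW i j b Hi Hj Hij W4 W5. intros; subst; auto. }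
  have H3 : forall i j k, (i < 3)%N -> (j < 3)%N -> (k < 3)%N -> i <> j -> j <> k -> i <> k ->
      v i < v j -> v j < v k -> False.
  { intros i j k Hi Hj Hk Hij Hjk Hik H1 H2.
    have [HDj1 HDj2 HDj3] := HD j Hj.
    apply (trap_core (s := s) (pL := c i :: p i) (pR := c k :: p k) (cM := c j) (pM := p j)
      (d := d j) (q := q j)); auto; try discriminate.
    - intros w W1 W2. apply (HWW i j w); auto.
    - intros w W1 W2. apply (HWW j k w); auto.
    - intros w W1 W2. apply (HDW j i w); auto.
    - intros w W1 W2. apply (HDW j k w); auto. }
  have N01 : v 0%N <> v 1%N by apply Hdis.
  have N12 : v 1%N <> v 2%N by apply Hdis.
  have N02 : v 0%N <> v 2%N by apply Hdis.
  destruct (Rdichotomy _ _ N01); destruct (Rdichotomy _ _ N12); destruct (Rdichotomy _ _ N02);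
  solve [ lra
        | apply (H3 0 1 2)%N; try done; try discriminate; lra
        | apply (H3 0 2 1)%N; try done; try discriminate; lra
        | apply (H3 1 0 2)%N; try done; try discriminate; lra
        | apply (H3 1 2 0)%N; try done; try discriminate; lra
        | apply (H3 2 0 1)%N; try done; try discriminate; lra
        | apply (H3 2 1 0)%N; try done; try discriminate; lra ].
Qed.

End Draw.

From mathcomp Require Import zify.

Inductive kind := KR | KB of nat & nat | KE of nat.

Section Kinds.
Variable m : nat.
Definition BB := (2 * m).+1.
Definition enc (K : kind) : nat :=
  match K with KR => 0 | KB i o => 1 + i * BB + o | KE t => 1 + 3 * BB + t end.
Definition dec (v : nat) : kind :=
  if v == 0 then KR else
  if v <= 3 * BB then
    (if v - 1 < BB then KB 0 (v - 1) else if v - 1 < 2 * BB then KB 1 (v - 1 - BB)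
     else KB 2 (v - 1 - 2 * BB))
  else KE (v - 1 - 3 * BB).
Definition valid K := match K with KR => true | KB i o => (i < 3) && (o <= 2 * m) | KE _ => true end.

Lemma enc_dec v : enc (dec v) = v.
Proof.
  rewrite /dec /BB. case: eqP => [E0|H0]; first by rewrite ?E0.
  case: ifP => H1; [case: ifP => H2; [|case: ifP => H3]|]; rewrite /enc /BB; lia.
Qed.

Lemma dec_valid v : valid (dec v).
Proof.
  rewrite /dec /BB. case: eqP => [E0|H0]; first by rewrite ?E0.
  case: ifP => H1; [case: ifP => H2; [|case: ifP => H3]|] => //=; try (apply/andP; split); lia.
Qed.

Lemma dec_enc K : valid K -> dec (enc K) = K.
Proof.
  case: K => [|i o|t] //=.
  - move=> /andP [Hi Ho].
    have : i = 0 \/ i = 1 \/ i = 2 by lia.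
    case=> [->|[->|->]]; rewrite /dec /BB; (case: eqP => H0; first lia);
    (case: ifP => H1; last lia).
    + case: ifP => H2; [congr KB; lia | lia].
    + case: ifP => H2; first lia. case: ifP => H3; [congr KB; lia | lia].
    + case: ifP => H2; first lia. case: ifP => H3; [lia | congr KB; lia].
  - move=> _. rewrite /dec /BB. case: eqP => H0; first lia.
    case: ifP => H1; first lia. congr KE; lia.
Qed.

Lemma enc_inj K K' : valid K -> valid K' -> enc K = enc K' -> K = K'.
Proof. move=> H H' E. by rewrite -(dec_enc H) -(dec_enc H') E. Qed.

Definition E (K K' : kind) : bool :=
  match K, K' with
  | KR, KB i o => (i < 3) && (o == m)
  | KB i o, KB i' o' => (i == i') && (o' == o.+1) && (o' <= 2 * m)
  | KE t, KB i o => (t == 0) && (i == 0) && (o == 2 * m)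
  | KE t, KE t' => ((t' == t.+1) && ~~ odd t) || ((t == t'.+1) && odd t')
  | _, _ => false
  end.

Definition par (K : kind) : kind :=
  match K with
  | KR => KR
  | KB i o => if o == m then KR else if m < o then KB i o.-1 else KB i o.+1
  | KE 0 => KB 0 (2 * m)
  | KE t.+1 => KE t
  end.

Definition rank (K : kind) : nat :=
  match K with KR => 0 | KB i o => 1 + (o - m) + (m - o) | KE t => m + 2 + t end.

Lemma par_valid K : valid K -> valid (par K).
Proof.
  case: K => [|i o|[|t]] //=.
  move=> /andP [Hi Ho]. case: eqP => // H1. case: ifP => H2 /=; apply/andP; split; lia.
Qed.

Lemma par_rank K : K <> KR -> valid K -> rank (par K) < rank K.
Proof.
  case: K => [//|i o|[|t]] _ //=.
  - move=> /andP [Hi Ho]. case: eqP => H1 /=; first lia. case: ifP => H2 /=; lia.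
  - move=> _. lia.
  - move=> _. lia.
Qed.

Lemma par_enc K : valid K -> K <> KR -> enc (par K) < enc K \/ (enc (par K) <= 3 * BB).
Proof.
  case: K => [//|i o|[|t]] /=.
  - move=> /andP [Hi Ho] _. right.
    have : i = 0 \/ i = 1 \/ i = 2 by lia.
    case=> [->|[->|->]]; (case: eqP => H1 /=; rewrite /BB; first lia);
    case: ifP => H2 /=; rewrite /BB; lia.
  - move=> _ _; right. rewrite /BB; lia.
  - move=> _ _; left. lia.
Qed.

Ltac kb := repeat match goal with
  | H : is_true (_ && _) |- _ => case/andP: H
  | H : is_true (_ || _) |- _ => case/orP: H
  | |- _ => progress intros
  end.

Lemma adj_par K K' : valid K -> valid K' ->
  (E K K' \/ E K' K) <-> ((K = par K' /\ K' <> KR) \/ (K' = par K /\ K <> KR)).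
Proof.
  case: K => [|i o|t]; case: K' => [|i' o'|t'] /=.
  - move=> _ _; split; [case=>//|case=>[[_ H]|[_ H]]; by case: H].
  - move=> _ /andP [Hi Ho]. split.
    + case=> // /andP [_ /eqP Eo]. subst o'. left. rewrite eqxx. split; [done|discriminate].
    + case=> [[Hp _]|[Hp _]]; last discriminate.
      left. move: Hp. case: eqP => [_|_]; first by rewrite Hi.
      case: ifP => _; discriminate.
  - move=> _ _. split; [case=>//|]. case=> [[Hp _]|[Hp _]]; [by case: t' Hp | discriminate].
  - move=> /andP [Hi Ho] _. split.
    + case=>// /andP [_ /eqP Eo]. subst o. right. rewrite eqxx. split; [done|discriminate].
    + case=> [[Hp _]|[Hp _]]; first discriminate.
      right. move: Hp. case: eqP => [_|_]; first by rewrite Hi.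
      case: ifP => _; discriminate.
  - move=> /andP [Hi Ho] /andP [Hi' Ho']. split.
    + case=> /andP [/andP [/eqP Eii /eqP Eo] Hle]; subst i'.
      * case: (ltnP o m) => Hom.
        -- right. split; last discriminate. rewrite Eo. rewrite ifF; last lia.
           rewrite ifF; last lia. done.
        -- left. split; last discriminate. rewrite Eo. rewrite ifF; last lia.
           rewrite ifT; last lia. done.
      * case: (ltnP o' m) => Hom.
        -- left. split; last discriminate. rewrite Eo. rewrite ifF; last lia.
           rewrite ifF; last lia. done.
        -- right. split; last discriminate. rewrite Eo. rewrite ifF; last lia.
           rewrite ifT; last lia. done.
    + case=> [[Hp _]|[Hp _]].
      * move: Hp. case: eqP => H1 //. case: ifP => H2 [E1 E2]; subst i'.
        -- left. rewrite eqxx /=. apply/andP; split; [apply/eqP; lia | lia].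
        -- right. rewrite eqxx /=. apply/andP; split; [apply/eqP; lia | lia].
      * move: Hp. case: eqP => H1 //. case: ifP => H2 [E1 E2]; subst i'.
        -- right. rewrite eqxx /=. apply/andP; split; [apply/eqP; lia | lia].
        -- left. rewrite eqxx /=. apply/andP; split; [apply/eqP; lia | lia].
  - move=> /andP [Hi Ho] _. split.
    + case=> // /andP [/andP [/eqP -> /eqP ->] /eqP ->]. left. split; [done|discriminate].
    + case=> [[Hp _]|[Hp _]].
      * case: t' Hp => [|t'] //= [-> ->]. right. by rewrite !eqxx.
      * move: Hp. case: eqP => // H1. case: ifP => //.
  - move=> _ _. split; [case=>//|]. case=> [[Hp _]|[Hp _]]; [discriminate | by case: t Hp].
  - move=> _ /andP [Hi Ho]. split.
    + case=> // /andP [/andP [/eqP -> /eqP ->] /eqP ->]. right. split; [done|discriminate].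
    + case=> [[Hp _]|[Hp _]].
      * move: Hp. case: eqP => // H1. case: ifP => //.
      * case: t Hp => [|t] //= [-> ->]. left. by rewrite !eqxx.
  - move=> _ _. split.
    + case=> /orP [/andP [/eqP -> Ho]|/andP [/eqP -> Ho]].
      * left. split; [done|discriminate].
      * right. split; [done|discriminate].
      * right. split; [done|discriminate].
      * left. split; [done|discriminate].
    + case=> [[Hp _]|[Hp _]].
      * case: t' Hp => [//|t'] [->]. case Ho: (odd t').
        -- right. apply/orP; right. by rewrite eqxx.
        -- left. apply/orP; left. by rewrite eqxx.
      * case: t Hp => [//|t] [->]. case Ho: (odd t).
        -- left. apply/orP; right. by rewrite eqxx.
        -- right. apply/orP; left. by rewrite eqxx.
Qed.

End Kinds.

Section Kinds2.
Variable m : nat.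
Local Notation E := (E m).
Local Notation par := (par m).
Local Notation valid := (valid m).

Definition pot (K : kind) : Z :=
  match K with
  | KR => 0%Z
  | KB _ o => (Z.of_nat o + 1 - Z.of_nat m)%Z
  | KE t => (Z.of_nat m + (if odd t then 1 else 0))%Z
  end.

Lemma E_pot K K' : E K K' -> pot K' = (pot K + 1)%Z.
Proof.
  case: K => [|i o|t]; case: K' => [|i' o'|t'] //=.
  - move=> /andP [_ /eqP ->]. lia.
  - move=> /andP [/andP [_ /eqP ->] _]. lia.
  - move=> /andP [/andP [/eqP -> _] /eqP ->]. simpl. rewrite -multE. lia.
  - move=> /orP [/andP [/eqP -> Ho]|/andP [/eqP -> Ho]] /=.
    + rewrite /= (negbTE Ho) /=. lia.
    + rewrite /= Ho /=. lia.
Qed.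

Lemma pot_bounds K : valid K -> (Z.min 0 (1 - Z.of_nat m) <= pot K <= 1 + Z.of_nat m)%Z.
Proof.
  case: K => [|i o|t]; cbn [pot].
  - move=> _; lia.
  - move=> /andP [_ Ho]. lia.
  - move=> _. case: (odd t); lia.
Qed.

Definition nb (K : kind) : kind * kind * kind :=
  match K with
  | KR => (KB 0 m, KB 1 m, KB 2 m)
  | KB i o => (par (KB i o), (if (i == 0) && (o == 2 * m) then KE 0 else KB i o.+1), KB i o.-1)
  | KE t => (par (KE t), KE t.+1, KE t)
  end.

Lemma nb_ok K K' : valid K -> valid K' -> (E K K' \/ E K' K) ->
  K' = (nb K).1.1 \/ K' = (nb K).1.2 \/ K' = (nb K).2.
Proof.
  move=> HK HK' /(adj_par HK HK') [[Hp HR]|[Hp HR]].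
  - move: HK' HR Hp. case: K' => [|i o|[|t]] //= HK' _.
    + case/andP: HK' => Hi Ho. case: eqP => H1.
      * move=> ->. subst o. simpl.
        have : i = 0 \/ i = 1 \/ i = 2 by lia.
        case=> [->|[->|->]]; auto.
      * case: ifP => H2 -> /=.
        -- right; left. rewrite ifF; last lia. congr KB; lia.
        -- right; right. congr KB; lia.
    + move=> -> /=. right; left. by rewrite !eqxx.
    + move=> -> /=. right; left. done.
  - left. move: HK HR Hp. by case: K.
Qed.

End Kinds2.

Section Geo.
Local Open Scope R_scope.
Variable m : nat.
Local Notation E := (E m).
Local Notation valid := (valid m).

Definition X (K : kind) : R :=
  match K with KR => -/2 | KB i o => INR i - 1 | KE t => -2 - INR t end.
Definition Yr (K : kind) : R :=
  match K with
  | KR => 0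
  | KB i o => INR o + 1 - (if i == 1%N then 0 else INR m)
  | KE t => INR m + (if odd t then 1 else 0)
  end.
Definition yD (K : kind) : Z :=
  match K with
  | KR => 0%Z
  | KB i o => (Z.of_nat o + 1 - (if i == 1%N then 0 else Z.of_nat m))%Z
  | KE t => (Z.of_nat m + (if odd t then 1 else 0))%Z
  end.

Lemma yD_Yr K : IZR (yD K) = Yr K.
Proof.
  case: K => [|i o|t] /=. reflexivity.
  - rewrite minus_IZR plus_IZR -INR_IZR_INZ. case: (i == 1%N); [reflexivity|rewrite -INR_IZR_INZ; reflexivity].
  - rewrite plus_IZR -INR_IZR_INZ. case: (odd t); reflexivity.
Qed.

Definition seg (K K' : kind) (s : R) : R * R :=
  (X K + s * (X K' - X K), Yr K + s * (Yr K' - Yr K)).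

Inductive eshape : kind -> kind -> Prop :=
| ShR i : (i < 3)%N -> eshape KR (KB i m)
| ShC i o : (i < 3)%N -> (o < 2 * m)%N -> eshape (KB i o) (KB i o.+1)
| ShX : eshape (KE 0) (KB 0 (2 * m))
| ShZ1 t : ~~ odd t -> eshape (KE t) (KE t.+1)
| ShZ2 t : odd t -> eshape (KE t.+1) (KE t).

Lemma E_shape K K' : valid K -> E K K' -> eshape K K'.
Proof.
  case: K => [|i o|t]; case: K' => [|i' o'|t'] //=.
  - move=> _ /andP [Hi /eqP ->]. by constructor.
  - move=> /andP [Hi _] /andP [/andP [/eqP <- /eqP ->] Ho].
    constructor; auto.
  - move=> _ /andP [/andP [/eqP -> /eqP ->] /eqP ->]. constructor.
  - move=> _ /orP [/andP [/eqP -> Ho]|/andP [/eqP -> Ho]]; by constructor.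
Qed.

Lemma int1 s a b : 0 <= s <= 1 -> s + INR a = INR b -> s = 0 \/ s = 1.
Proof.
  intros Hs Hab.
  have : (b <= a \/ b = a.+1 \/ a.+2 <= b)%N by lia.
  case=> [H|[H|H]].
  - have : INR b <= INR a by apply le_INR; lia. lra.
  - subst b. rewrite S_INR in Hab. lra.
  - have : INR (a.+2) <= INR b by apply le_INR; lia. rewrite !S_INR. lra.
Qed.

Lemma int2 s t a b : 0 <= s <= 1 -> 0 <= t <= 1 -> s + INR a = t + INR b -> a <> b ->
  (s = 0 \/ s = 1) /\ (t = 0 \/ t = 1).
Proof.
  intros Hs Ht Hab Hne.
  have : (a.+1 <= b \/ b.+1 <= a)%N by lia.
  case=> H.
  - have : INR (a.+1) <= INR b by apply le_INR; lia. rewrite S_INR. lra.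
  - have : INR (b.+1) <= INR a by apply le_INR; lia. rewrite S_INR. lra.
Qed.

Ltac fin := solve [ exfalso; lra | exfalso; nra
  | split; (solve [left; lra | right; lra]) ].
Ltac di i := (have : (i = 0 \/ i = 1 \/ i = 2)%N by lia); case=> [->|[->|->]].

Lemma seg_meet K1 K2 K3 K4 s t : eshape K1 K2 -> eshape K3 K4 ->
  (K1 <> K3 \/ K2 <> K4) -> 0 <= s <= 1 -> 0 <= t <= 1 -> seg K1 K2 s = seg K3 K4 t ->
  (s = 0 \/ s = 1) /\ (t = 0 \/ t = 1).
Proof.
  move=> H1 H2 Hne Hs Ht Heq. move: Heq. rewrite /seg. case=> Hx Hy.
  have HM := pos_INR m.
  case: H1 Hne Hx Hy => [i Hi|i o Hi Ho||t1 Ht1|t1 Ht1];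
  case: H2 => [j Hj|j o' Hj Ho'||t2 Ht2|t2 Ht2].
  all: try (di i); try (di j).
  all: cbn -[INR]; move=> Hne Hx Hy; rewrite ?S_INR ?INR_0 in Hx Hy.
  all: try (have := pos_INR t1; intro); try (have := pos_INR t2; intro); try (have := pos_INR o; intro); try (have := pos_INR o'; intro).
  all: try fin.
  all: try (exfalso; case: Hne => Hne; apply Hne; reflexivity).
 idtac.
  - have Es : s = 3 * t by lra. subst s. have Et : t = 0 by nra. subst t. split; left; lra.
  - have Et : t = 3 * s by lra. subst t. have Es : s = 0 by nra. subst s. split; left; lra.
  - have Es : s = 1 by lra. subst s. split; [by right|]. apply (int1 (a := o') (b := m)); auto; lra.
  - have Es : s = 1 by lra. subst s. split; [by right|]. apply (int1 (a := o') (b := m)); auto; lra.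
  - have Es : s = 1 by lra. subst s. split; [by right|]. apply (int1 (a := o') (b := m)); auto; lra.
  - have Et : t = 1 by lra. subst t. split; [|by right]. apply (int1 (a := o) (b := m)); auto; lra.
  - have Et : t = 1 by lra. subst t. split; [|by right]. apply (int1 (a := o) (b := m)); auto; lra.
  - have Et : t = 1 by lra. subst t. split; [|by right]. apply (int1 (a := o) (b := m)); auto; lra.
  - have Hoo : o <> o' by move=> E; subst o'; case: Hne; auto.
    apply (int2 (a := o) (b := o')); auto; lra.
  - have Hoo : o <> o' by move=> E; subst o'; case: Hne; auto.
    apply (int2 (a := o) (b := o')); auto; lra.
  - have Hoo : o <> o' by move=> E; subst o'; case: Hne; auto.
    apply (int2 (a := o) (b := o')); auto; lra.
  - have Et : t = 1 by lra. subst t. split; [|by right]. apply (int1 (a := o) (b := 2 * m)); auto; lra.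
  - have Es : s = 1 by lra. subst s. split; [by right|]. apply (int1 (a := o') (b := 2 * m)); auto; lra.
  - have Htt : t1 <> t2 by move=> E; subst t2; case: Hne; auto.
    apply (int2 (a := t1) (b := t2)); auto; lra.
  - have Htt : t2 <> t1 by move=> E; subst t2; rewrite Ht2 in Ht1.
    have := int2 (s := 1 - s) (t := t) (a := t2) (b := t1) ltac:(lra) Ht ltac:(lra) Htt.
    case=> [[Ha|Ha] Hb]; split; auto; lra.
  - have Htt : t2 <> t1 by move=> E; subst t2; rewrite Ht1 in Ht2.
    have := int2 (s := s) (t := 1 - t) (a := t2) (b := t1) Hs ltac:(lra) ltac:(lra) Htt.
    case=> [Ha [Hb|Hb]]; split; auto; lra.
  - have Htt : t1 <> t2 by move=> E; subst t2; case: Hne; auto.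
    apply (int2 (a := t2) (b := t1)); auto; lra.
Qed.

Lemma shape_yD K K' : eshape K K' -> (yD K < yD K')%Z.
Proof.
  case=> [i Hi|i o Hi Ho||t Ht|t Ht]; cbn -[Z.of_nat].
  - case: (eqn i 1); lia.
  - case: (eqn i 1); lia.
  - rewrite -multE. lia.
  - rewrite (negbTE Ht) /=. lia.
  - rewrite Ht /=. lia.
Qed.

Lemma XY_inj K K' : valid K -> valid K' -> X K = X K' -> Yr K = Yr K' -> K = K'.
Proof.
  have HM := pos_INR m.
  case: K => [|i o|t]; case: K' => [|i' o'|t'] //= HK HK' Hx Hy.
  all: try (have := pos_INR t; intro); try (have := pos_INR t'; intro).
  all: try (move: HK => /andP [HK1 HK2]); try (move: HK' => /andP [HK1' HK2']).
  all: move: Hx Hy; try (di i); try (di i'); move=> Hx Hy; cbn -[INR] in Hx, Hy; rewrite ?S_INR ?INR_0 in Hx Hy; try lra.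
  all: try (congr KB; apply INR_eq; lra).
  congr KE. apply INR_eq; lra.
Qed.

Lemma incident K : valid K -> exists K', valid K' /\ (E K K' \/ E K' K).
Proof.
  move=> HK. case HR: (K) => [|i o|t].
  - exists (KB 0 m). split. apply/andP; split; lia. left. rewrite /= eqxx. done.
  - subst K. exists (par m (KB i o)). split. by apply par_valid.
    apply (adj_par HK (par_valid HK)). right. split; [done|discriminate].
  - subst K. exists (par m (KE t)). split. by apply par_valid.
    apply (adj_par HK (par_valid HK)). right. split; [done|discriminate].
Qed.

End Geo.

Lemma seq_max (T : eqType) (f : T -> nat) (x : T) (s : seq T) :
  exists2 w, w \in x :: s & forall y, y \in x :: s -> f y <= f w.
Proof.
  elim: s x => [|z s IH] x.
  - exists x; first by rewrite mem_head. by move=> y; rewrite inE => /eqP ->.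
  - have [w Hw Hm] := IH z.
    case: (leqP (f x) (f w)) => H.
    + exists w; first by rewrite in_cons Hw orbT.
      move=> y; rewrite in_cons => /orP [/eqP ->//|]. exact: Hm.
    + exists x; first by rewrite mem_head.
      move=> y; rewrite in_cons => /orP [/eqP ->//|/Hm]. move=> Hy; apply: leq_trans Hy _; exact: ltnW.
Qed.

Lemma last_in (T : eqType) (a : T) (t : seq T) : t <> [::] -> last a t \in t.
Proof. case: t => [//|c t] _. exact: (mem_last c t). Qed.

Lemma tree_gen n (e : rel 'I_n) (r : 'I_n) (pa : 'I_n -> 'I_n) (rk : 'I_n -> nat) :
  (forall v, v <> r -> rk (pa v) < rk v) ->
  (forall u v, uadj e u v <-> (u = pa v /\ v <> r) \/ (v = pa u /\ u <> r)) ->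
  (forall u v, connect (uadj e) u v) /\ ~ has_ucycle e.
Proof.
  move=> Hrk Hadj.
  have Hsym : symmetric (uadj e) by move=> u v; rewrite /uadj orbC.
  have Hr : forall k v, rk v < k -> connect (uadj e) v r.
  { elim=> [//|k IH] v Hv.
    case: (eqVneq v r) => [->|Hne]; first exact: connect0.
    apply: (connect_trans (y := pa v)).
    - apply: connect1. apply/(proj2 (Hadj _ _)). right. split; auto. by apply/eqP.
    - apply: IH. have := Hrk v (elimN eqP Hne). lia. }
  split.
  - move=> u v. apply: (connect_trans (y := r)). exact: (Hr (rk u).+1).
    rewrite (sym_connect_sym Hsym). exact: (Hr (rk v).+1).
  - case=> s [Hs Hu Hc].
    case: s Hs Hu Hc => [//|x s] Hs Hu Hc.
    have [w Hw Hm] := seq_max rk x s.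
    case: (rot_to Hw) => i t Hrot.
    have Hc' : cycle (uadj e) (w :: t) by rewrite -Hrot rot_cycle.
    have Hu' : uniq (w :: t) by rewrite -Hrot rot_uniq.
    have Hs' : 3 <= size (w :: t) by rewrite -Hrot size_rot.
    have Hmem : forall z, z \in w :: t -> z \in x :: s by move=> z; rewrite -Hrot mem_rot.
    clear Hrot.
    case: t Hc' Hu' Hs' Hmem => [//|a t'] Hc' Hu' Hs' Hmem.
    have Ht' : t' <> [::] by move=> E; subst t'.
    move: Hc'. rewrite /cycle rcons_path => /andP [Hp Hlast].
    move: Hp => /= /andP [Hwa _].
    set b := last a t' in Hlast.
    have Hbin : b \in t' by apply: last_in.
    move: Hu' => /= /andP [Hwn /andP [Han _]].
    have Hab : a != b by apply/eqP => E; rewrite E Hbin in Han.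
    have Hwa' : w != a by apply/eqP => E; rewrite E mem_head in Hwn.
    have Hwb : w != b by apply/eqP => E; rewrite E in_cons Hbin orbT in Hwn.
    have Hra : rk a <= rk w by apply: Hm; apply: Hmem; rewrite in_cons mem_head orbT.
    have Hrb : rk b <= rk w by apply: Hm; apply: Hmem; rewrite !in_cons Hbin !orbT.
    have Ea : a = pa w.
    { case: (proj1 (Hadj _ _) Hwa) => [[E Ha]|[E Hw']]; last done.
      have := Hrk a Ha. rewrite -E. lia. }
    have Eb : b = pa w.
    { case: (proj1 (Hadj _ _) Hlast) => [[E Hw']|[E Hb]]; first done.
      have := Hrk b Hb. rewrite -E. lia. }
    by rewrite Ea Eb eqxx in Hab.
Qed.

Section Conc.
Variables (m n' : nat).
Hypothesis Hn : (6 * m + 4 <= n'.+1)%N.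
Local Notation N := n'.+1.
Local Notation dec := (dec m).
Local Notation enc := (enc m).

Definition vtx (K : kind) : 'I_N := inord (enc K).
Definition eC : rel 'I_N := fun u v => E m (dec u) (dec v).

Lemma vtx_dec (u : 'I_N) : vtx (dec u) = u.
Proof. apply: val_inj. rewrite /vtx /= inordK enc_dec //. Qed.

Lemma dec_vtx K : valid m K -> (enc K < N)%N -> dec (vtx K) = K.
Proof. move=> HK Hl. rewrite /vtx inordK; [exact: dec_enc | lia]. Qed.

Lemma eq_decP (u v : 'I_N) : dec u = dec v -> u = v.
Proof. move=> E. by rewrite -(vtx_dec u) -(vtx_dec v) E. Qed.

Lemma encB i o : (i < 3)%N -> (o <= 2 * m)%N -> (enc (KB i o) < N)%N.
Proof.
  move=> Hi Ho. have : i = 0 \/ i = 1 \/ i = 2 by lia.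
  case=> [->|[->|->]]; rewrite /= /BB; lia.
Qed.

Lemma par_lt (u : 'I_N) : (enc (par m (dec u)) < N)%N.
Proof.
  have HV := dec_valid m u. have HE := enc_dec m u.
  case Hk: (dec u) HV HE => [|i o|t] HV HE; first by [].
  all: case: (par_enc HV ltac:(discriminate)); rewrite ?HE; [have := ltn_ord u; lia | rewrite /BB; lia].
Qed.

Lemma dec_par (u : 'I_N) : dec (vtx (par m (dec u))) = par m (dec u).
Proof. apply: dec_vtx. apply: par_valid; apply: dec_valid. exact: par_lt. Qed.

Definition potI (u : 'I_N) := pot m (dec u).

Lemma eC_pot u v : eC u v -> potI v = (potI u + 1)%Z.
Proof. exact: E_pot. Qed.

Lemma path_pot x p : path eC x p -> potI (last x p) = (potI x + Z.of_nat (size p))%Z.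
Proof.
  elim: p x => [|z p IH] x /=; first lia.
  move=> /andP [H1 H2]. rewrite (IH z H2) (eC_pot H1). lia.
Qed.

Lemma L_tree : directed_tree eC.
Proof.
  have Hsimple : simple_underlying eC.
  { split.
    - move=> u. apply/negP => H. have := eC_pot H. lia.
    - move=> u v H. apply/negP => H'. have := eC_pot H. have := eC_pot H'. lia. }
  split.
  - move=> u v H. apply/negP => /connectP [p Hp Hu].
    have := path_pot Hp. rewrite -Hu (eC_pot H). lia.
  - have Hrk : forall v : 'I_N, v <> vtx KR -> (rank m (dec (vtx (par m (dec v)))) < rank m (dec v))%N.
    { move=> v Hv. rewrite dec_par. apply: par_rank; last exact: dec_valid.
      move=> E. apply: Hv. apply: eq_decP. rewrite E dec_vtx //. }
    have Hadj : forall u v : 'I_N, uadj eC u v <->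
        (u = vtx (par m (dec v)) /\ v <> vtx KR) \/ (v = vtx (par m (dec u)) /\ u <> vtx KR).
    { move=> u v. rewrite /uadj /eC.
      have HA := adj_par (dec_valid m u) (dec_valid m v).
      have Hr : forall w : 'I_N, w <> vtx KR <-> dec w <> KR.
      { move=> w; split => H E; apply: H.
        - apply: eq_decP. rewrite E dec_vtx //.
        - by rewrite E dec_vtx. }
      have Hp : forall w w' : 'I_N, w = vtx (par m (dec w')) <-> dec w = par m (dec w').
      { move=> w w'; split => H.
        - by rewrite H dec_par.
        - apply: eq_decP. by rewrite dec_par. }
      split.
      * move=> /orP H. have : E m (dec u) (dec v) \/ E m (dec v) (dec u) by case: H; auto.
        move/HA. case=> [[H1 H2]|[H1 H2]].
        -- left. split; [exact/Hp | exact/Hr].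
        -- right. split; [exact/Hp | exact/Hr].
      * move=> H. apply/orP. apply/HA. case: H => [[H1 H2]|[H1 H2]].
        -- left. split; [exact/Hp | exact/Hr].
        -- right. split; [exact/Hp | exact/Hr]. }
    have [Hc Hac] := tree_gen Hrk Hadj.
    split => //.
Qed.

Lemma c3 (T : finType) (x y z : T) : (#|[set x; y; z]| <= 3)%N.
Proof. rewrite !cardsU !cards1. lia. Qed.

Lemma L_deg v : (degree eC v <= 3)%N.
Proof.
  rewrite /degree.
  set a := (nb m (dec v)).1.1. set b := (nb m (dec v)).1.2. set c := (nb m (dec v)).2.
  apply: (leq_trans (subset_leq_card (B := [set vtx a; vtx b; vtx c]) _)); last exact: c3.
  apply/subsetP => w. rewrite inE /uadj /eC => /orP H.
  have H' : E m (dec v) (dec w) \/ E m (dec w) (dec v) by case: H; auto.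
  have := nb_ok (dec_valid m v) (dec_valid m w) H'.
  rewrite -/a -/b -/c. case=> [E|[E|E]]; rewrite -(vtx_dec w) E !inE eqxx ?orbT //.
Qed.

Lemma L_paths l : (2 * m <= l)%N -> (m + 1 <= l)%N -> paths_at_most eC l.
Proof.
  move=> H1 H2 x p Hp.
  have := path_pot Hp. rewrite /potI.
  have := pot_bounds (dec_valid m x). have := pot_bounds (dec_valid m (last x p)).
  lia.
Qed.

End Conc.

Section Conc2.
Local Open Scope R_scope.
Variables (m n' : nat).
Hypothesis Hn : (6 * m + 4 <= n'.+1)%N.
Local Notation N := n'.+1.
Local Notation dec := (dec m).
Local Notation vtx := (@vtx m n').
Local Notation eC := (@eC m n').

Definition pxD (u : 'I_N) : R := X (dec u).
Definition yDD (u : 'I_N) : Z := yD m (dec u).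
Definition crvD (u v : 'I_N) (t : R) : R * R := seg m (dec u) (dec v) t.

Lemma vptD u : vpt pxD yDD u = (X (dec u), Yr m (dec u)).
Proof. by rewrite /vpt /pxD /yDD yD_Yr. Qed.

Lemma eC_shape u v : eC u v -> eshape m (dec u) (dec v).
Proof. move=> H. apply: E_shape; [exact: dec_valid | exact: H]. Qed.

Lemma seg0 K K' : seg m K K' 0 = (X K, Yr m K).
Proof. rewrite /seg. f_equal; ring. Qed.
Lemma seg1 K K' : seg m K K' 1 = (X K', Yr m K').
Proof. rewrite /seg. f_equal; ring. Qed.

Lemma shape_Yr K K' : eshape m K K' -> Yr m K < Yr m K'.
Proof. move=> H. rewrite -!yD_Yr. apply: IZR_lt. exact: shape_yD. Qed.

Lemma kinds_ne (u v u' v' : 'I_N) : (u, v) <> (u', v') -> dec u <> dec u' \/ dec v <> dec v'.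
Proof.
  move=> H. case: (eqVneq u u') => [Eu|Nu].
  - right. move=> E. apply: H. rewrite Eu. rewrite (eq_decP E). done.
  - left. move=> E. by move: Nu; rewrite (eq_decP E) eqxx.
Qed.

Lemma incidentI (w : 'I_N) : exists w', eC w w' \/ eC w' w.
Proof.
  have HV := dec_valid m w.
  case Hk: (dec w) HV => [|i o|t] HV.
  - exists (vtx (KB 0 m)). left. rewrite /eC Hk (dec_vtx Hn).
    + by rewrite /= eqxx.
    + rewrite /=; lia.
    + rewrite /=; lia.
  - exists (vtx (par m (dec w))). rewrite /eC (dec_par Hn).
    have := proj2 (adj_par (dec_valid m w) (par_valid (dec_valid m w))). rewrite Hk.
    case. right. split; [done|discriminate]. by left. by right.
  - exists (vtx (par m (dec w))). rewrite /eC (dec_par Hn).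
    have := proj2 (adj_par (dec_valid m w) (par_valid (dec_valid m w))). rewrite Hk.
    case. right. split; [done|discriminate]. by left. by right.
Qed.

Lemma L_exists : exists px y crv, @layered_drawing N eC px y crv.
Proof.
  exists pxD, yDD, crvD. constructor.
  - move=> u v. rewrite !vptD. case=> Hx Hy. apply: eq_decP.
    exact: (XY_inj (dec_valid m u) (dec_valid m v) Hx Hy).
  - move=> u v _. rewrite /crvD /seg /=. split; reg.
  - move=> u v _. by rewrite /crvD seg0 vptD.
  - move=> u v _. by rewrite /crvD seg1 vptD.
  - move=> u v H s t Hs Ht Hst. rewrite /crvD /seg /=.
    have := shape_Yr (eC_shape H). rewrite /in01 in Hs Ht. nra.
  - move=> u v H t Ht w Hw.
    have [w' Hw'] := incidentI w.
    have HY := shape_Yr (eC_shape H).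
    have Hsame : forall a b, eC a b -> (w = a \/ w = b) -> False.
    { move=> a b Hab Hwab.
      case: (eqVneq (u, v) (a, b)) => [E|Ne].
      - case: E => Ea Eb. subst a b. rewrite /crvD vptD /seg in Hw.
        case: Hw => _ Hy. case: Hwab => Ew; subst w; nra.
      - have Hk := kinds_ne (elimN eqP Ne).
        case: Hwab => Ew; subst w.
        + have := seg_meet (eC_shape H) (eC_shape Hab) Hk (s := t) (t := 0).
          rewrite seg0 -vptD. move=> Hm. have := Hm ltac:(lra) ltac:(lra) Hw. lra.
        + have := seg_meet (eC_shape H) (eC_shape Hab) Hk (s := t) (t := 1).
          rewrite seg1 -vptD. move=> Hm. have := Hm ltac:(lra) ltac:(lra) Hw. lra. }
    case: Hw' => Hw'.
    + exact: (Hsame _ _ Hw' (or_introl erefl)).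
    + exact: (Hsame _ _ Hw' (or_intror erefl)).
  - move=> u v u' v' H H' Hne s t Hs Ht Heq.
    have Hk := kinds_ne Hne.
    have [Hs01 Ht01] := seg_meet (eC_shape H) (eC_shape H') Hk Hs Ht Heq.
    have Hpt : forall (a b : 'I_N) (r : R), r = 0 \/ r = 1 ->
        exists x, (x = a \/ x = b) /\ crvD a b r = vpt pxD yDD x.
    { move=> a b r [->|->]; [exists a | exists b]; split; auto;
        by rewrite /crvD ?seg0 ?seg1 vptD. }
    have [x [Hx Ex]] := Hpt u v s Hs01.
    have [x' [Hx' Ex']] := Hpt u' v' t Ht01.
    exists x. split; auto. split; auto.
    have Exx : x = x'.
    { apply: eq_decP. move: Ex Ex'. rewrite /crvD in Heq *. rewrite Heq !vptD => -> [Hx1 Hy1].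
      exact: (XY_inj (dec_valid m x) (dec_valid m x') Hx1 Hy1). }
    by rewrite Exx.
Qed.

End Conc2.

Section Conc3.
Variables (m n' : nat).
Hypothesis Hn : (6 * m + 4 <= n'.+1)%N.
Local Notation N := n'.+1.
Local Notation dec := (dec m).
Local Notation vtx := (@vtx m n').
Local Notation eC := (@eC m n').

Definition col i a k : seq 'I_N := [seq vtx (KB i o) | o <- iota a k].

Lemma dec_KB i o : (i < 3)%N -> (o <= 2 * m)%N -> dec (vtx (KB i o)) = KB i o.
Proof. move=> Hi Ho. apply: (dec_vtx Hn). by rewrite /= Hi Ho. exact: encB. Qed.

Lemma dec_KR : dec (vtx KR) = KR.
Proof. apply: (dec_vtx Hn) => //. Qed.

Lemma col_path i a k : (i < 3)%N -> (a + k <= 2 * m)%N -> path eC (vtx (KB i a)) (col i a.+1 k).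
Proof.
  move=> Hi. elim: k a => [|k IH] a Hk //=.
  apply/andP; split.
  - rewrite /eC (dec_KB Hi) ?(dec_KB Hi) /=; try lia; rewrite ?eqxx /=; lia.
  - apply: IH. lia.
Qed.

Lemma col_last i a k : last (vtx (KB i a)) (col i a.+1 k) = vtx (KB i (a + k)).
Proof.
  elim: k a => [|k IH] a /=; first by rewrite addn0.
  rewrite IH. by rewrite addSnnS.
Qed.

Lemma col_mem i a k w : w \in col i a k -> exists o, (a <= o < a + k)%N /\ w = vtx (KB i o).
Proof. move/mapP => [o Ho ->]. rewrite mem_iota in Ho. by exists o. Qed.

Lemma root_edge i : (i < 3)%N -> eC (vtx KR) (vtx (KB i m)).
Proof. move=> Hi. rewrite /eC dec_KR (dec_KB Hi) /=; last lia. by rewrite Hi eqxx. Qed.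

Lemma L_lower px y crv : @layered_drawing N eC px y crv -> drawing_span_ge eC y m.+1.
Proof.
  move=> D. apply: NNPP => Hneg.
  have Hsp : forall u v, eC u v -> (y v - y u <= Z.of_nat m)%Z.
  { move=> u v H. case: (Z.le_gt_cases (y v - y u) (Z.of_nat m)) => // Hlt.
    exfalso. apply: Hneg. exists u, v. split; auto. lia. }
  have [Hm|Hm] : m = 0 \/ (1 <= m)%N by lia.
  { have H := root_edge (i := 0) isT. have := edge_y D H. have := Hsp _ _ H. lia. }
  have Hwall : forall i w, (i < 3)%N -> w \in vtx KR :: vtx (KB i m) :: col i m.+1 m ->
      w = vtx KR \/ exists o, (o <= 2 * m)%N /\ w = vtx (KB i o).
  { move=> i w Hi. rewrite in_cons => /orP [/eqP ->|]; first by left.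
    rewrite in_cons => /orP [/eqP ->|]; first by right; exists m; split => //; lia.
    move/col_mem => [o [Ho ->]]. right. exists o. split => //. lia. }
  have HDm : forall i w, (i < 3)%N -> w \in vtx (KB i 0) :: col i 1 m ->
      exists o, (o <= 2 * m)%N /\ w = vtx (KB i o).
  { move=> i w Hi. rewrite in_cons => /orP [/eqP ->|]; first by exists 0; split => //; lia.
    move/col_mem => [o [Ho ->]]. exists o. split => //. lia. }
  apply: (trap3 D (s := vtx KR) (c := fun i => vtx (KB i m)) (d := fun i => vtx (KB i 0))
    (p := fun i => col i m.+1 m) (q := fun i => col i 1 m)).
  - move=> i Hi /=. rewrite root_edge //=. apply: col_path => //. lia.
  - move=> i Hi. split.
    + apply: col_path => //. lia.
    + move=> E. have := congr1 size E. rewrite size_map size_iota /=. lia.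
    + by rewrite col_last add0n.
  - move=> i Hi. apply: IZR_le.
    have := path_y D (col_path (a := 0) (k := m) Hi ltac:(lia)).
    rewrite col_last size_map size_iota add0n.
    have := Hsp _ _ (root_edge Hi). lia.
  - move=> i j Hi Hj /=. apply: IZR_le.
    have := path_y D (col_path (a := m) (k := m) Hj ltac:(lia)).
    rewrite col_last size_map size_iota.
    have := Hsp _ _ (root_edge Hi). have := edge_y D (root_edge Hj). lia.
  - move=> i j w Hi Hj Hij Hwi Hwj.
    case: (Hwall i w Hi Hwi) => [//|[o [Ho Ew]]].
    case: (Hwall j w Hj Hwj) => [E|[o' [Ho' Ew']]].
    + move: E. rewrite Ew => E. have := congr1 (fun x : 'I_N => dec x) E. by rewrite dec_KR (dec_KB Hi Ho).
    + have := congr1 (fun x : 'I_N => dec x) (etrans (esym Ew) Ew'). rewrite (dec_KB Hi Ho) (dec_KB Hj Ho').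
      by case.
  - move=> i j w Hi Hj Hij Hwi Hwj.
    have [o [Ho Ew]] := HDm i w Hi Hwi.
    case: (Hwall j w Hj Hwj) => [E|[o' [Ho' Ew']]].
    + have := congr1 (fun x : 'I_N => dec x) (etrans (esym Ew) E). by rewrite dec_KR (dec_KB Hi Ho).
    + have := congr1 (fun x : 'I_N => dec x) (etrans (esym Ew) Ew'). rewrite (dec_KB Hi Ho) (dec_KB Hj Ho').
      by case.
Qed.

End Conc3.

Theorem mainTheorem3 :
  forall l n : nat, 0 < l -> 3 * l + 4 <= n ->
  exists e : rel 'I_n,
    [/\ directed_tree e,
        (forall v, degree e v <= 3),
        paths_at_most e l
      & span_ge e ((l + 2) %/ 2)].
Proof.
  move=> l n Hl Hn.
  set m := l %/ 2.
  have Hk : (l + 2) %/ 2 = m.+1 by rewrite /m; lia.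
  case: n Hn => [|n'] Hn; first lia.
  have Hn' : (6 * m + 4 <= n'.+1)%N by rewrite /m; lia.
  exists (@eC m n'). rewrite Hk. split.
  - exact: (L_tree Hn').
  - exact: (L_deg Hn').
  - apply: (L_paths Hn'); rewrite /m; lia.
  - split; [exact: (L_exists Hn') | move=> px y crv D; exact: (L_lower Hn' D)].
Qed.
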